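(* Let $S$ be the vertex set of an acute $0/1$-simplex in $[0,1]^n$ with $k\leq n$ vertices, and let $m\geq1$. Regard $[0,1]^n$ as the facet of $[0,1]^{n+m}$ consisting of points whose last $m$ coordinates vanish, so that $S$ is also the vertex set of an acute $0/1$-simplex in $[0,1]^{n+m}$. Then $$\mathcal{C}^{n+m}(S)=\left\{\begin{bmatrix}v\\ w\end{bmatrix}: v\in\mathcal{C}^n(S),\ w\in\{0,1\}^m\right\},\qquad \mathcal{A}^{n+m}(S)\supseteq\left\{\begin{bmatrix}v\\ w\end{bmatrix}: v\in\mathcal{A}^n(S),\ w\in\{0,1\}^m\right\}.$$ Moreover, for each $v\in\mathcal{C}^n(S)$ there exists an integer $\ell$ such that, for $w\in\{0,1\}^m$ (with $m$ large enough), $w^\top w\geq\ell$ if and only if $\begin{bmatrix}v\\ w\end{bmatrix}\in\mathcal{A}^{n+m}(S)$.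
   Context: A set of $j+1$ affinely independent points $a_0,\dots,a_j\in\{0,1\}^N$ is the vertex set of an acute $0/1$-$j$-simplex if all dihedral angles of their convex hull are acute; equivalently, with $P=[a_1-a_0,\dots,a_j-a_0]$ and $G=P^\top P$, every off-diagonal entry of $G^{-1}$ is negative and every row sum of $G^{-1}$ is positive. For the vertex set $S\subseteq\{0,1\}^N$ of an acute $0/1$-simplex: the set of acute extensions $\mathcal{A}^N(S)$ consists of all $v\in\{0,1\}^N$ such that $S\cup\{v\}$ is the vertex set of an acute $0/1$-simplex with one more vertex; the set of candidate acute extensions $\mathcal{C}^N(S)$ consists of all $v\in\{0,1\}^N$ whose orthogonal projection onto the affine hull of $S$ lies in the (relative) interior of the convex hull of $S$. *)

(* Defs.v *)
From HB Require Import structures.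
From mathcomp Require Import all_boot all_order all_algebra.
Set Implicit Arguments. Unset Strict Implicit. Unset Printing Implicit Defensive.
Import Order.TTheory GRing.Theory Num.Theory.
Local Open Scope ring_scope.

(* 0/1 points of R^N, i.e. elements of {0,1}^N, as bit vectors. *)
Definition bv (N : nat) := {ffun 'I_N -> bool}.

Definition bv0 (N : nat) : bv N := [ffun => false].

Section Geometry.
Variable R : realFieldType.

Definition vec (N : nat) (x : bv N) : 'cV[R]_N := \col_i (x i)%:R.

Definition dot (N : nat) (x y : 'cV[R]_N) : R := \sum_i x i 0 * y i 0.

(* For an ordering s = [a_0; a_1; ...; a_j] of the vertices:
   P = [a_1 - a_0, ..., a_j - a_0], G = P^T P; the simplex is acute iff
   G is invertible (affine independence), every off-diagonal entry of G^{-1}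
   is negative and every row sum of G^{-1} is positive. *)
Definition edge_mx (N : nat) (s : seq (bv N)) : 'M[R]_(N, (size s).-1) :=
  \matrix_(r, c) (vec (nth (bv0 N) s c.+1) r 0 - vec (head (bv0 N) s) r 0).

Definition gram_mx (N : nat) (s : seq (bv N)) : 'M[R]_((size s).-1) :=
  (edge_mx s)^T *m edge_mx s.

Definition acute_seq (N : nat) (s : seq (bv N)) : bool :=
  let G := gram_mx s in
  [&& G \in unitmx,
      [forall i, forall k, (i != k) ==> (invmx G i k < 0)] &
      [forall i, 0 < \sum_k invmx G i k]].

Definition is_acute (N : nat) (S : {set bv N}) : Prop :=
  exists s : seq (bv N), [/\ (0 < size s)%N, uniq s, S =i s & acute_seq s].

Definition acute_ext (N : nat) (S : {set bv N}) (v : bv N) : Prop :=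
  v \notin S /\ is_acute (v |: S).

(* Candidate acute extensions C^N(S): the orthogonal projection p of v onto
   aff(S) lies in the relative interior of conv(S), i.e. p = sum lam_x x with
   all lam_x > 0, sum lam_x = 1, and v - p orthogonal to aff(S). *)
Definition cand_ext (N : nat) (S : {set bv N}) (v : bv N) : Prop :=
  exists lam : bv N -> R,
    [/\ (forall x, x \in S -> 0 < lam x),
        \sum_(x in S) lam x = 1 &
        forall x y, x \in S -> y \in S ->
          dot (vec v - \sum_(z in S) lam z *: vec z) (vec x - vec y) = 0].

End Geometry.

Definition catbv (n m : nat) (v : bv n) (w : bv m) : bv (n + m) :=
  [ffun i => match split i with inl a => v a | inr b => w b end].

Definition embedS (n m : nat) (S : {set bv n}) : {set bv (n + m)} :=
  [set catbv x (bv0 m) | x in S].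

Definition wtw (m : nat) (w : bv m) : nat := \sum_i (w i : nat).

(* Main.v *)
Require Import Defs.
From HB Require Import structures.
From mathcomp Require Import all_boot all_order all_algebra.
From mathcomp Require Import ring lra zify.
From Stdlib Require Classical_Prop.
Import Order.TTheory GRing.Theory Num.Theory.
Local Open Scope ring_scope.
Set Implicit Arguments. Unset Strict Implicit. Unset Printing Implicit Defensive.

Section Basics.
Variable R : realFieldType.

Definition gE N (s : seq (bv N)) (i k : nat) : R :=
  dot (vec R (nth (bv0 N) s i.+1) - vec R (nth (bv0 N) s 0))
      (vec R (nth (bv0 N) s k.+1) - vec R (nth (bv0 N) s 0)).

Lemma gram_gE N (s : seq (bv N)) i k : gram_mx R s i k = gE s i k.
Proof.
rewrite /gram_mx /gE /dot !mxE; apply: eq_bigr => j _; rewrite !mxE -nth0.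
done.
Qed.

Definition acute_mx K (G : 'M[R]_K) : bool :=
  [&& G \in unitmx,
      [forall i, forall k, (i != k) ==> (invmx G i k < 0)] &
      [forall i, 0 < \sum_k invmx G i k]].

Definition acuteF K (f : nat -> nat -> R) := acute_mx (\matrix_(i < K, k < K) f i k).

Lemma acute_seqF N (s : seq (bv N)) : acute_seq R s = acuteF (size s).-1 (gE s).
Proof.
rewrite /acute_seq /acuteF -/(acute_mx _); congr acute_mx.
by apply/matrixP => i k; rewrite mxE gram_gE.
Qed.

Lemma acuteF_ext K f g : (forall i k, (i < K)%N -> (k < K)%N -> f i k = g i k) ->
  acuteF K f = acuteF K g.
Proof.
move=> H; rewrite /acuteF; congr acute_mx.
by apply/matrixP => i k; rewrite !mxE H.
Qed.

Lemma sm K (G : 'M[R]_K) (c : 'cV_K) t :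
  G \in unitmx -> G^T = G ->
  1 + t * (c^T *m (invmx G *m c)) 0 0 != 0 ->
  (G + t *: (c *m c^T)) *m
    (invmx G - (t / (1 + t * (c^T *m (invmx G *m c)) 0 0)) *:
        ((invmx G *m c) *m (invmx G *m c)^T)) = 1%:M.
Proof.
set M := invmx G; set h := M *m c; set a := (c^T *m h) 0 0 => uG sG na.
have sM : M^T = M by rewrite /M trmx_inv sG.
have Gh : G *m h = c by rewrite /h mulmxA mulmxV // mul1mx.
have cM : c^T *m M = h^T by rewrite /h trmx_mul sM.
have ch : c^T *m h = a%:M by rewrite [LHS]mx11_scalar.
have hc : h^T *m c = a%:M by rewrite -[h^T *m c]trmxK trmx_mul trmxK ch tr_scalar_mx.
rewrite mulmxDl !mulmxBr mulmxV // -!scalemxAl -!scalemxAr !mulmxA.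
rewrite mulmxV // mul1mx -(mulmxA c c^T M) cM -(mulmxA c h^T c) hc mul_mx_scalar.
rewrite -scalemxAl !scalerA.
set X := c *m h^T.
have -> : (t * (t / (1 + t * a) * a)) = t - t / (1 + t * a) by field.
by rewrite scalerBl opprB (addrC (t *: X)) !subrK.
Qed.


Definition cc (r i : nat) : R := (i.+1 == r)%:R - (r == 0)%:R.

Lemma acuteP K (G : 'M[R]_K) :
  reflect [/\ G \in unitmx, forall i k, i != k -> invmx G i k < 0 &
              forall i, 0 < \sum_k invmx G i k] (acute_mx G).
Proof.
apply: (iffP and3P) => [[u /forallP o /forallP p]|[u o p]]; split => //.
- by move=> i k ik; move: (o i) => /forallP /(_ k) /implyP; apply.
- by apply/forallP => i; apply/forallP => k; apply/implyP; apply: o.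
- by apply/forallP.
Qed.

Lemma rank1 K f r t : (forall i k, f i k = f k i) -> (r <= K)%N -> 0 <= t ->
  acuteF K f -> acuteF K (fun i k => f i k + t * cc r i * cc r k).
Proof.
move=> fs rK t0; rewrite /acuteF.
set G := \matrix_(i < K, k < K) f i k.
set c := \col_(i < K) cc r i.
have -> : \matrix_(i < K, k < K) (f i k + t * cc r i * cc r k) = G + t *: (c *m c^T).
  apply/matrixP => i k; rewrite !mxE big_ord1 !mxE mulrA; done.
case/acuteP => uG off rs.
have sG : G^T = G by apply/matrixP => i k; rewrite !mxE fs.
set M := invmx G.
have sM : forall i k, M i k = M k i.
  by move=> i k; have := congr1 (fun A : 'M_K => A i k) (trmx_inv G); rewrite sG mxE.
set h := M *m c; set a := (c^T *m h) 0 0.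
set kk := t / (1 + t * a).
have hE : forall i, h i 0 = \sum_j M i j * cc r j.
  by move=> i; rewrite /h mxE; apply: eq_bigr => j _; rewrite !mxE.
have aE : a = \sum_(i < K) cc r i * h i 0.
  by rewrite /a mxE; apply: eq_bigr => j _; rewrite !mxE.
suff [a0 Hoff Hrs] : [/\ 0 <= a,
    forall i k, i != k -> M i k - kk * h i 0 * h k 0 < 0 &
    forall i, 0 < \sum_k M i k - kk * h i 0 * \sum_k h k 0].
  have na : 1 + t * a != 0 by rewrite gt_eqF // ltr_pwDl // mulr_ge0.
  have hF : forall i, \sum_j M i j * c j ord0 = h i 0 by move=> i; rewrite mxE.
  have E := sm uG sG na.
  have [uG' _] := mulmx1_unit E.
  have iE : invmx (G + t *: (c *m c^T)) = M - kk *: (h *m h^T).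
    by rewrite -[RHS](mulKmx uG') E mulmx1.
  apply/acuteP; split => //.
  - move=> i k ik; rewrite iE !mxE big_ord1 !mxE mulrA !hF; exact: Hoff.
  - move=> i; rewrite iE.
    have -> : \sum_k0 (M - kk *: (h *m h^T)) i k0 = \sum_k M i k - kk * h i 0 * \sum_k h k 0.
      rewrite mulr_sumr -sumrB; apply: eq_bigr => k _.
      by rewrite !mxE big_ord1 !mxE mulrA !hF.
    exact: Hrs.
have da : 0 <= a -> 0 < 1 + t * a by move=> a0; rewrite ltr_pwDl // mulr_ge0.
have kk0 : 0 <= a -> 0 <= kk by move=> a0; rewrite /kk divr_ge0 // ltW // da.
have k1 : 0 <= a -> 0 < 1 - kk * a.
  move=> a0; have d := da a0.
  have -> : 1 - kk * a = (1 + t * a)^-1 by rewrite /kk; field; rewrite gt_eqF.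
  by rewrite invr_gt0.
case: (posnP r) => [r0|rpos].
- have hE0 : forall i, h i 0 = - \sum_k M i k.
    by move=> i; rewrite hE -sumrN; apply: eq_bigr => j _; rewrite /cc r0 /= sub0r mulrN1.
  have aE0 : a = \sum_i \sum_k M i k.
    by rewrite aE; apply: eq_bigr => i _; rewrite hE0 /cc r0 /= sub0r mulN1r opprK.
  have a0 : 0 <= a by rewrite aE0 sumr_ge0 // => i _; exact: ltW (rs i).
  have kp := kk0 a0; have kq := k1 a0.
  split => //.
  + move=> i k ik; rewrite !hE0 !mulrN !mulNr !opprK.
    have := off i k ik; have := rs i; have := rs k.
    rewrite -/M => ri rk o.
    have : 0 <= kk * (\sum_k0 M i k0) * \sum_k0 M k k0.
      by apply: mulr_ge0; [apply: mulr_ge0 => //|]; apply: ltW.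
    lra.
  + move=> i.
    have sh : \sum_k h k 0 = - a by rewrite aE0 -sumrN; apply: eq_bigr => k _; rewrite hE0.
    rewrite hE0 sh !mulrN !mulNr !opprK -mulrA (mulrC _ a) mulrA.
    have := rs i; rewrite -/M => ri.
    have -> : \sum_k M i k - kk * a * \sum_k M i k = (1 - kk * a) * \sum_k M i k by ring.
    by rewrite mulr_gt0.
- set p := r.-1; have rp : r = p.+1 by rewrite prednK.
  have pK : (p < K)%N by rewrite -ltnS -rp.
  set pp : 'I_K := Ordinal pK.
  have ccp : forall j : 'I_K, cc r j = (j == pp)%:R by move=> j; rewrite /cc rp eqSS subr0.
  have hEp : forall i, h i 0 = M i pp.
    move=> i; rewrite hE (bigD1 pp) // ccp eqxx mulr1 big1 /= ?addr0 // => j /negbTE jp.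
    by rewrite ccp jp mulr0.
  have aEp : a = M pp pp.
    rewrite aE (bigD1 pp) // ccp eqxx mul1r hEp big1 /= ?addr0 // => j /negbTE jp.
    by rewrite ccp jp mul0r.
  have a0 : 0 < a.
    have := rs pp; rewrite -/M (bigD1 pp) // aEp.
    have : \sum_(i < K | i != pp) M pp i <= 0.
      by rewrite -oppr_ge0 -sumrN sumr_ge0 // => i ip; rewrite oppr_ge0 ltW // off // eq_sym.
    by rewrite /=; lra.
  have kp := kk0 (ltW a0); have kq := k1 (ltW a0).
  split => //; first exact: ltW.
  + move=> i k ik; rewrite !hEp.
    case: (eqVneq i pp) => [ip|ip].
      rewrite ip -aEp (sM k pp).
      have o : M pp k < 0 by apply: off; rewrite -ip.
      have -> : M pp k - kk * a * M pp k = (1 - kk * a) * M pp k by ring.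
      by rewrite pmulr_rlt0.
    case: (eqVneq k pp) => [kp'|kp'].
      rewrite kp' -aEp.
      have o : M i pp < 0 by apply: off.
      have -> : M i pp - kk * M i pp * a = (1 - kk * a) * M i pp by ring.
      by rewrite pmulr_rlt0.
    have o := off i k ik; have oi := off i pp ip; have ok := off k pp kp'.
    rewrite -/M in o oi ok.
    have : 0 <= kk * M i pp * M k pp.
      by rewrite -mulrA mulr_ge0 // mulr_le0 // ltW.
    lra.
  + move=> i; rewrite hEp.
    have sh : \sum_k h k 0 = \sum_k M pp k.
      by apply: eq_bigr => k _; rewrite hEp sM.
    rewrite sh; have ri := rs i; have rq := rs pp; rewrite -/M in ri rq.
    case: (eqVneq i pp) => [ip|ip].
      rewrite ip -aEp.
      have -> : \sum_k M pp k - kk * a * \sum_k M pp k = (1 - kk * a) * \sum_k M pp k by ring.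
      by rewrite mulr_gt0.
    have oi := off i pp ip; rewrite -/M in oi.
    have : kk * M i pp * \sum_k M pp k <= 0.
      by rewrite -mulrA mulr_ge0_le0 // mulr_le0_ge0 // ltW.
    lra.
Qed.

End Basics.

Definition fstb n m (u : bv (n + m)) : bv n := [ffun i => u (lshift m i)].
Definition sndb n m (u : bv (n + m)) : bv m := [ffun j => u (rshift n j)].

Lemma catbv_l n m (v : bv n) (w : bv m) i : catbv v w (lshift m i) = v i.
Proof. by rewrite ffunE (unsplitK (inl _ i)). Qed.

Lemma catbv_r n m (v : bv n) (w : bv m) j : catbv v w (rshift n j) = w j.
Proof. by rewrite ffunE (unsplitK (inr _ j)). Qed.

Lemma catbvK n m (u : bv (n + m)) : catbv (fstb u) (sndb u) = u.
Proof.
apply/ffunP => i; rewrite ffunE.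
by case: split_ordP => [j ->|j ->]; rewrite ffunE.
Qed.

Lemma fst_cat n m (v : bv n) (w : bv m) : fstb (catbv v w) = v.
Proof. by apply/ffunP => i; rewrite ffunE catbv_l. Qed.

Lemma snd_cat n m (v : bv n) (w : bv m) : sndb (catbv v w) = w.
Proof. by apply/ffunP => i; rewrite ffunE catbv_r. Qed.

Lemma catbv_inj n m (v v' : bv n) (w w' : bv m) :
  catbv v w = catbv v' w' -> v = v' /\ w = w'.
Proof.
by move=> E; split; [rewrite -(fst_cat v w) E fst_cat | rewrite -(snd_cat v w) E snd_cat].
Qed.

Lemma catbv00 n m : catbv (bv0 n) (bv0 m) = bv0 (n + m).
Proof. by apply/ffunP => i; rewrite !ffunE; case: split => j; rewrite ffunE. Qed.

Definition Fs n m (q : seq (bv n)) (r : nat) (w : bv m) : seq (bv (n + m)) :=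
  mkseq (fun i => catbv (nth (bv0 n) q i) (if i == r then w else bv0 m)) (size q).

Lemma size_Fs n m q r (w : bv m) : size (@Fs n m q r w) = size q.
Proof. by rewrite size_mkseq. Qed.

Lemma nth_Fs n m q r (w : bv m) i : (r < size q)%N ->
  nth (bv0 (n + m)) (Fs q r w) i = catbv (nth (bv0 n) q i) (if i == r then w else bv0 m).
Proof.
move=> rq; case: (ltnP i (size q)) => iq; first by rewrite nth_mkseq.
rewrite !nth_default ?size_mkseq //.
have -> : (i == r) = false by apply/negbTE; apply/eqP => ir; move: rq; rewrite -ir ltnNge iq.
by rewrite catbv00.
Qed.

Section Gram.
Variable R : realFieldType.

Lemma dot_split n m (X Y : 'cV[R]_(n + m)) :
  dot X Y = \sum_(i < n) X (lshift m i) 0 * Y (lshift m i) 0 +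
            \sum_(j < m) X (rshift n j) 0 * Y (rshift n j) 0.
Proof. by rewrite /dot big_split_ord. Qed.

Lemma dotC N (X Y : 'cV[R]_N) : dot X Y = dot Y X.
Proof. by rewrite /dot; apply: eq_bigr => i _; rewrite mulrC. Qed.

Lemma gE_sym N (q : seq (bv N)) i k : gE R q i k = gE R q k i.
Proof. by rewrite /gE dotC. Qed.

Lemma gE_Fs n m (q : seq (bv n)) r (w : bv m) i k : (r < size q)%N ->
  gE R (Fs q r w) i k = gE R q i k + (wtw w)%:R * cc R r i * cc R r k.
Proof.
move=> rq; rewrite /gE !nth_Fs // dot_split; congr (_ + _).
  by rewrite /dot; apply: eq_bigr => j _; rewrite !mxE !catbv_l.
have tl : forall x (b : bool) j, ((catbv x (if b then w else bv0 m) (rshift n j))%:R : R)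
    = b%:R * (w j)%:R.
  by move=> x b j; rewrite catbv_r; case: b; rewrite ?ffunE ?mul1r ?mul0r.
rewrite /wtw natr_sum mulr_suml mulr_suml; apply: eq_bigr => j _.
rewrite !mxE !tl /cc (eq_sym r 0).
case: (w j); rewrite /=; ring.
Qed.

End Gram.

Lemma mem_embedS n m (S : {set bv n}) (v : bv n) (w : bv m) :
  (catbv v w \in embedS m S) = (v \in S) && (w == bv0 m).
Proof.
apply/imsetP/andP => [[x xS /catbv_inj [-> ->]]|[vS /eqP ->]]; first by [].
by exists v.
Qed.

Section Build.
Variable R : realFieldType.

Lemma build n m (S : {set bv n}) (v : bv n) (w : bv m) (q : seq (bv n)) r :
  (r < size q)%N -> nth (bv0 n) q r = v ->
  (forall i, (i < size q)%N -> i != r -> nth (bv0 n) q i \in S) ->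
  (forall x, x \in S -> exists2 i, (i < size q)%N & (i != r) && (nth (bv0 n) q i == x)) ->
  (forall i j, (i < size q)%N -> (j < size q)%N -> i != r -> j != r ->
      nth (bv0 n) q i = nth (bv0 n) q j -> i = j) ->
  catbv v w \notin embedS m S ->
  acuteF (size q).-1 (fun i k => gE R q i k + (wtw w)%:R * cc R r i * cc R r k) ->
  acute_ext R (embedS m S) (catbv v w).
Proof.
move=> rq qr qS cov qinj nE ac; split => //.
exists (Fs q r w); split.
- by rewrite size_Fs; apply: leq_ltn_trans rq.
- apply/(uniqP (bv0 _)) => i j; rewrite !inE size_Fs => iq jq.
  rewrite !nth_Fs //.
  case: (eqVneq i r) => [->|ir]; case: (eqVneq j r) => [->|jr] //.
  + rewrite qr => /catbv_inj [vq w0]; case/negP: nE.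
    by rewrite mem_embedS vq qS // w0 eqxx.
  + rewrite qr => /catbv_inj [vq w0]; case/negP: nE.
    by rewrite mem_embedS -vq qS // -w0 eqxx.
  + by move=> /catbv_inj [E _]; apply: qinj.
- move=> x; rewrite in_setU1; apply/idP/idP.
  + case/orP => [/eqP ->|/imsetP [y yS ->]].
      by apply/(nthP (bv0 _)); exists r; rewrite ?size_Fs // nth_Fs // eqxx qr.
    have [i iq /andP [ir /eqP qi]] := cov y yS.
    by apply/(nthP (bv0 _)); exists i; rewrite ?size_Fs // nth_Fs // (negbTE ir) qi.
  + case/(nthP (bv0 _)) => i; rewrite size_Fs => iq <-; rewrite nth_Fs //.
    case: (eqVneq i r) => [->|ir]; first by rewrite qr eqxx.
    by rewrite mem_embedS qS // eqxx orbT.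
- rewrite acute_seqF size_Fs.
  by rewrite (acuteF_ext (g := fun i k => gE R q i k + (wtw w)%:R * cc R r i * cc R r k))
     // => i k _ _; rewrite gE_Fs.
Qed.

End Build.

Section Extract.
Variable R : realFieldType.

Lemma extract n m (S : {set bv n}) (v : bv n) (w : bv m) :
  acute_ext R (embedS m S) (catbv v w) ->
  exists q : seq (bv n), exists r, [/\ (r < size q)%N, nth (bv0 n) q r = v,
  (forall i, (i < size q)%N -> i != r -> nth (bv0 n) q i \in S),
  (forall x, x \in S -> exists2 i, (i < size q)%N & (i != r) && (nth (bv0 n) q i == x)) &
  (forall i j, (i < size q)%N -> (j < size q)%N -> i != r -> j != r ->
      nth (bv0 n) q i = nth (bv0 n) q j -> i = j) /\
  acuteF (size q).-1 (fun i k => gE R q i k + (wtw w)%:R * cc R r i * cc R r k)].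
Proof.
case=> nE [s [s0 us sE ac]].
set u := catbv v w.
have us' : u \in s by rewrite -sE setU11.
set r := index u s.
have rq : (r < size s)%N by rewrite index_mem.
set q := map (@fstb n m) s.
have sq : size q = size s by rewrite size_map.
have nthq : forall i, (i < size s)%N -> nth (bv0 n) q i = fstb (nth (bv0 _) s i).
  by move=> i iq; rewrite (nth_map (bv0 _)).
have sin : forall i, (i < size s)%N -> i != r ->
    nth (bv0 _) s i = catbv (nth (bv0 n) q i) (bv0 m) /\ nth (bv0 n) q i \in S.
  move=> i iq ir.
  have : nth (bv0 _) s i \in u |: embedS m S by rewrite sE mem_nth.
  rewrite in_setU1; case/orP => [/eqP E|/imsetP [x xS E]].
    by case/negP: ir; rewrite /r -E index_uniq.
  by rewrite nthq // E fst_cat.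
have qr : nth (bv0 n) q r = v by rewrite nthq // nth_index // fst_cat.
have sF : s = Fs q r w.
  apply: (eq_from_nth (x0 := bv0 _)); first by rewrite size_Fs sq.
  move=> i iq; rewrite nth_Fs ?sq //.
  case: (eqVneq i r) => [->|ir]; first by rewrite qr nth_index.
  by case: (sin i iq ir).
exists q, r; split; rewrite ?sq //.
- by move=> i iq ir; case: (sin i iq ir).
- move=> x xS.
  have xs : catbv x (bv0 m) \in s by rewrite -sE in_setU1 mem_embedS xS eqxx orbT.
  exists (index (catbv x (bv0 m)) s); first by rewrite index_mem.
  apply/andP; split.
    apply/eqP => E; case/negP: nE.
    have -> : catbv v w = catbv x (bv0 m) by rewrite -/u -(nth_index (bv0 _) us') -/r -E nth_index.
    by rewrite mem_embedS xS eqxx.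
  by rewrite nthq ?index_mem // nth_index // fst_cat.
- split.
  move=> i j iq jq ir jr E.
  apply/eqP; rewrite -(nth_uniq (bv0 _) iq jq us).
  by case: (sin i iq ir) => -> _; case: (sin j jq jr) => -> _; rewrite E.
- move: ac; rewrite sF acute_seqF size_Fs.
  by rewrite (acuteF_ext (g := fun i k => gE R q i k + (wtw w)%:R * cc R r i * cc R r k))
     // => i k _ _; rewrite gE_Fs ?sq.
Qed.

End Extract.

Section Up.
Variable R : realFieldType.

Lemma up n m (S : {set bv n}) (v : bv n) (w : bv m) (q : seq (bv n)) r (t0 : nat) :
  (r < size q)%N -> nth (bv0 n) q r = v ->
  (forall i, (i < size q)%N -> i != r -> nth (bv0 n) q i \in S) ->
  (forall x, x \in S -> exists2 i, (i < size q)%N & (i != r) && (nth (bv0 n) q i == x)) ->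
  (forall i j, (i < size q)%N -> (j < size q)%N -> i != r -> j != r ->
      nth (bv0 n) q i = nth (bv0 n) q j -> i = j) ->
  catbv v w \notin embedS m S ->
  acuteF (size q).-1 (fun i k => gE R q i k + t0%:R * cc R r i * cc R r k) ->
  (t0 <= wtw w)%N ->
  acute_ext R (embedS m S) (catbv v w).
Proof.
move=> rq qr qS cov qinj nE ac tw.
have rK : (r <= (size q).-1)%N by rewrite -ltnS prednK // (leq_ltn_trans _ rq).
apply: (build rq qr qS cov qinj nE _).
have := rank1 (t := (wtw w - t0)%:R) _ rK _ ac.
rewrite (acuteF_ext (g := fun i k => gE R q i k + (wtw w)%:R * cc R r i * cc R r k)).
- apply => //.
  by move=> i k; rewrite gE_sym; ring.
- by move=> i k _ _; rewrite natrB //; ring.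
Qed.

Lemma part2 n m (S : {set bv n}) (v : bv n) (w : bv m) :
  acute_ext R S v -> acute_ext R (embedS m S) (catbv v w).
Proof.
case=> vS [s [s0 us sE ac]].
have vs : v \in s by rewrite -sE setU11.
set r := index v s.
have rq : (r < size s)%N by rewrite index_mem.
have sin : forall i, (i < size s)%N -> i != r -> nth (bv0 n) s i \in S.
  move=> i iq ir.
  have : nth (bv0 _) s i \in v |: S by rewrite sE mem_nth.
  rewrite in_setU1; case/orP => [/eqP E|//].
  by case/negP: ir; rewrite /r -E index_uniq.
apply: (up (q := s) (r := r) (t0 := 0)) => //.
- by rewrite nth_index.
- move=> x xS.
  have xs : x \in s by rewrite -sE in_setU1 xS orbT.
  exists (index x s); first by rewrite index_mem.
  rewrite nth_index // eqxx andbT; apply/eqP => E.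
  by case/negP: vS; rewrite -(nth_index (bv0 _) vs) -/r -E nth_index.
- by move=> i j iq jq _ _ E; apply/eqP; rewrite -(nth_uniq (bv0 _) iq jq us) E.
- by rewrite mem_embedS (negbTE vS).
- move: ac; rewrite acute_seqF.
  by rewrite (acuteF_ext (g := fun i k => gE R s i k + 0%:R * cc R r i * cc R r k))
     // => i k _ _; rewrite !mul0r addr0.
Qed.

End Up.

Section Block.
Variable R : realFieldType.
Variable k : nat.
Variable G : 'M[R]_k.
Variable f : nat -> nat -> R.
Variables y b : 'I_k -> R.
Variable c1 : R.
Hypothesis uG : G \in unitmx.
Hypothesis sG : G^T = G.
Hypothesis fG : forall i j : 'I_k, f i j = G i j.
Hypothesis fb : forall i : 'I_k, f i k = b i.
Hypothesis fb' : forall j : 'I_k, f k j = b j.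
Hypothesis fc : f k k = c1.
Hypothesis bG : forall i, b i = \sum_j G i j * y j.

Let M := invmx G.
Let d := c1 - \sum_i y i * b i.

Definition Nmx : 'M[R]_k.+1 := \matrix_(i, j)
  match unlift ord_max i, unlift ord_max j with
  | Some i', Some j' => M i' j' + y i' * y j' / d
  | Some i', None => - (y i' / d)
  | None, Some j' => - (y j' / d)
  | None, None => d^-1 end.

Lemma wl (l : 'I_k) : unlift ord_max (widen_ord (leqnSn k) l) = Some l.
Proof.
have -> : widen_ord (leqnSn k) l = lift ord_max l by apply: val_inj; rewrite /= /bump leqNgt ltn_ord.
by rewrite liftK.
Qed.

Lemma sMk : forall i j, M i j = M j i.
Proof. by move=> i j; have := congr1 (fun A : 'M_k => A i j) (trmx_inv G); rewrite sG mxE. Qed.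

Lemma bM : forall j, \sum_l b l * M l j = y j.
Proof.
move=> j.
have E : G *m (\col_i y i) = \col_i b i.
  by apply/matrixP => i z; rewrite !mxE bG; apply: eq_bigr => l _; rewrite mxE.
have := congr1 (fun A : 'cV_k => A j 0) (mulKmx uG (\col_i y i)).
rewrite E !mxE => <-; apply: eq_bigr => l _; rewrite mxE mulrC sMk.
done.
Qed.

Lemma block_inv : d != 0 -> (\matrix_(i < k.+1, j < k.+1) f i j) *m Nmx = 1%:M.
Proof.
move=> d0.
have GM : forall i j, \sum_l G i l * M l j = (i == j)%:R.
  move=> i j; have := congr1 (fun A : 'M_k => A i j) (mulmxV uG).
  by rewrite !mxE.
apply/matrixP => i j; rewrite !mxE big_ord_recr /=.
case: (unliftP ord_max i) => [i' ->|->]; case: (unliftP ord_max j) => [j' ->|->].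
- rewrite (inj_eq (@lift_inj _ ord_max)).
  under eq_bigr => l _ do rewrite !mxE wl liftK lift_max fG.
  rewrite !mxE liftK unlift_none lift_max fb.
  under eq_bigr => l _ do rewrite mulrDr.
  rewrite big_split /= GM.
  have -> : \sum_(l < k) G i' l * (y l * y j' / d) = b i' * y j' / d.
    by rewrite bG mulr_suml mulr_suml; apply: eq_bigr => l _; rewrite !mulrA.
  rewrite mulrN -addrA mulrA subrr addr0; done.
- rewrite eq_sym (negbTE (neq_lift _ _)) /=.
  under eq_bigr => l _ do rewrite !mxE wl unlift_none lift_max fG.
  rewrite !mxE unlift_none lift_max fb.
  have -> : \sum_(l < k) G i' l * - (y l / d) = - (b i' / d).
    by rewrite bG mulr_suml -sumrN; apply: eq_bigr => l _; rewrite mulrN mulrA.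
  by rewrite addrC mulrC subrr.
- rewrite (negbTE (neq_lift _ _)) /=.
  under eq_bigr => l _ do rewrite !mxE wl liftK /= fb' mulrDr.
  rewrite !mxE unlift_none liftK fc big_split /= bM.
  have -> : \sum_(l < k) b l * (y l * y j' / d) = (\sum_l y l * b l) * y j' / d.
    by rewrite mulr_suml mulr_suml; apply: eq_bigr => l _; rewrite !mulrA (mulrC (b l)).
  have -> : y j' + (\sum_l y l * b l) * y j' / d + c1 * - (y j' / d) = y j' * (1 - d / d)
    by rewrite /d; ring.
  by rewrite mulfV // subrr mulr0.
- under eq_bigr => l _ do rewrite !mxE wl unlift_none /= fb'.
  rewrite !mxE unlift_none fc eqxx /=.
  have -> : \sum_(l < k) b l * - (y l / d) = - ((\sum_l y l * b l) / d).
    by rewrite mulr_suml -sumrN; apply: eq_bigr => l _; rewrite mulrN mulrA (mulrC (b l)).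
  have -> : - ((\sum_l y l * b l) / d) + c1 / d = d / d by rewrite /d; ring.
  by rewrite mulfV.
Qed.

Lemma block_acute : acute_mx G -> 0 < d -> (forall i, 0 < y i) -> 0 < 1 - \sum_j y j ->
  (forall i j, i != j -> y i * y j < d * - M i j) ->
  (forall i, y i * (1 - \sum_j y j) < d * \sum_j M i j) ->
  acute_mx (\matrix_(i < k.+1, j < k.+1) f i j).
Proof.
move=> aG d0 y0 l0 Hoff Hrs.
have E := block_inv (lt0r_neq0 d0).
have [uF _] := mulmx1_unit E.
have iE : invmx (\matrix_(i < k.+1, j < k.+1) f i j) = Nmx.
  by rewrite -[RHS](mulKmx uF) E mulmx1.
have yd : forall i, 0 < y i / d by move=> i; rewrite divr_gt0.
apply/acuteP; split => //; rewrite iE.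
- move=> i j; rewrite !mxE.
  case: (unliftP ord_max i) => [i' ->|->]; case: (unliftP ord_max j) => [j' ->|->];
    rewrite ?liftK ?unlift_none.
  + move=> ij; have ij' : i' != j' by apply: contra ij => /eqP ->.
    have h : y i' * y j' / d < - M i' j' by rewrite ltr_pdivrMr // [_ * d]mulrC Hoff.
    move: h; set X := y i' * y j' / d; lra.
  + by move=> _; rewrite oppr_lt0.
  + by move=> _; rewrite oppr_lt0.
  + by rewrite eqxx.
- move=> i; rewrite big_ord_recr /=.
  under eq_bigr => j _ do rewrite !mxE wl.
  rewrite !mxE unlift_none.
  case: (unliftP ord_max i) => [i' _|_] /=.
  + rewrite big_split /=.
    have -> : \sum_(j < k) y i' * y j / d = y i' * (\sum_j y j) / d by rewrite mulr_sumr mulr_suml.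
    have h : y i' * (1 - \sum_j y j) / d < \sum_j M i' j by rewrite ltr_pdivrMr // [_ * d]mulrC Hrs.
    have e2 : y i' * (1 - \sum_j y j) / d = y i' / d - y i' * (\sum_j y j) / d by rewrite mulrBr mulr1 mulrBl.
    move: h; rewrite e2; lra.
  + have -> : \sum_(j < k) - (y j / d) + d^-1 = (1 - \sum_j y j) / d.
      by rewrite sumrN -mulr_suml; ring.
    by rewrite divr_gt0.
Qed.

End Block.

Section Rat.
Variable R : realFieldType.

Lemma rat_bound (x : rat) : exists N : nat, `|(ratr x : R)| <= N%:R.
Proof.
have h := archi_boundP (normr_ge0 x).
exists (Num.Def.archi_bound `|x|).
by rewrite -ratr_norm -(ratr_nat R) ler_rat ltW.
Qed.

Lemma gE_ratr N (s : seq (bv N)) i j : gE R s i j = ratr (gE rat s i j).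
Proof.
rewrite /gE /dot rmorph_sum; apply: eq_bigr => r _.
by rewrite !mxE rmorphM !rmorphB /= !ratr_nat.
Qed.

Lemma dotBl N (X Y Z : 'cV[R]_N) : dot (X - Y) Z = dot X Z - dot Y Z.
Proof. by rewrite /dot -sumrB; apply: eq_bigr => i _; rewrite !mxE mulrBl. Qed.

End Rat.

Lemma wtw0 m : wtw (bv0 m) = 0%N.
Proof. by rewrite /wtw big1 // => i _; rewrite ffunE. Qed.

Section Big.
Variable R : realFieldType.

Lemma sum_S_seq n (S : {set bv n}) (sS : seq (bv n)) (F : bv n -> R) :
  uniq sS -> S =i sS -> \sum_(z in S) F z = \sum_(j < size sS) F (nth (bv0 n) sS j).
Proof.
move=> us sE.
rewrite (eq_bigl (fun z => z \in sS)); last by move=> z; rewrite sE.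
by rewrite -big_uniq // (big_nth (bv0 n)) big_mkord.
Qed.

Lemma big_t n (S : {set bv n}) (v : bv n) : is_acute R S -> cand_ext R S v ->
  exists T : nat, forall m (w : bv m), (T <= wtw w)%N ->
    acute_ext R (embedS m S) (catbv v w).
Proof.
case=> sS [s0 us sE ac] [lam [lpos lsum lort]].
set k := (size sS).-1.
have sk : size sS = k.+1 by rewrite prednK.
set q := rcons sS v.
have sq : size q = k.+2 by rewrite size_rcons sk.
have nq : forall j, (j < k.+1)%N -> nth (bv0 n) q j = nth (bv0 n) sS j.
  by move=> j jk; rewrite nth_rcons sk jk.
have nqk : nth (bv0 n) q k.+1 = v by rewrite nth_rcons sk ltnn eqxx.
set G := \matrix_(i < k, j < k) gE R sS i j.
have aG : acute_mx G by move: ac; rewrite acute_seqF -/k.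
have uG : G \in unitmx by case/acuteP: aG.
have sG : G^T = G by apply/matrixP => i j; rewrite !mxE gE_sym.
set M := invmx G.
set y := fun i : 'I_k => lam (nth (bv0 n) sS i.+1).
set b := fun i : 'I_k => gE R q i k.
set c0 := gE R q k k.
set l0 := lam (nth (bv0 n) sS 0).
have inS : forall j, (j < k.+1)%N -> nth (bv0 n) sS j \in S.
  by move=> j jk; rewrite sE mem_nth // sk.
have y0 : forall i, 0 < y i by move=> i; apply: lpos; apply: inS; exact: ltn_ord.
have ll0 : 0 < l0 by apply: lpos; apply: inS.
have lsum' : l0 + \sum_i y i = 1.
  by rewrite -lsum (sum_S_seq _ us sE) sk big_ord_recl.
have fG : forall i j : 'I_k, gE R q i j = G i j.
  by move=> i j; rewrite mxE /gE !nq // ltnS ltn_ord.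
have PE : forall r, (\sum_(z in S) lam z *: vec R z) r 0 =
    ((nth (bv0 n) sS 0 r)%:R + \sum_j y j * ((nth (bv0 n) sS j.+1 r)%:R - (nth (bv0 n) sS 0 r)%:R) : R).
  move=> r; rewrite summxE (sum_S_seq (fun z => (lam z *: vec R z) r 0) us sE) sk big_ord_recl /=.
  under eq_bigr => j _ do rewrite /bump leq0n add1n !mxE.
  rewrite !mxE -/l0.
  under [in RHS]eq_bigr => j _ do rewrite mulrBr.
  rewrite sumrB -mulr_suml.
  have -> : l0 = 1 - \sum_i y i by rewrite -lsum' addrK.
  rewrite /y; ring.
have bG : forall i, b i = \sum_j G i j * y j.
  move=> i.
  have ik : (i.+1 < k.+1)%N by rewrite ltnS ltn_ord.
  have H := lort _ _ (inS i.+1 ik) (inS 0 isT).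
  rewrite /b /gE nqk !nq //.
  under eq_bigr => j _ do rewrite mxE.
  rewrite /dot in H *.
  transitivity (\sum_r (vec R (nth (bv0 n) sS i.+1) - vec R (nth (bv0 n) sS 0)) r 0 *
       (vec R v - vec R (nth (bv0 n) sS 0)) r 0 -
     \sum_r (vec R v - \sum_(z in S) lam z *: vec R z) r 0 *
       (vec R (nth (bv0 n) sS i.+1) - vec R (nth (bv0 n) sS 0)) r 0);
    first by rewrite H subr0.
  rewrite -sumrB.
  under [RHS]eq_bigr => j _ do rewrite mulr_suml.
  rewrite exchange_big /=; apply: eq_bigr => r _.
  rewrite !mxE PE.
  under [RHS]eq_bigr => j _ do rewrite !mxE.
  set E := ((nth (bv0 n) sS i.+1 r)%:R - (nth (bv0 n) sS 0 r)%:R : R).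
  have -> : \sum_(j < k) E * ((nth (bv0 n) sS j.+1 r)%:R - (nth (bv0 n) sS 0 r)%:R) * y j
    = E * \sum_j y j * ((nth (bv0 n) sS j.+1 r)%:R - (nth (bv0 n) sS 0 r)%:R).
    by rewrite mulr_sumr; apply: eq_bigr => j _; ring.
  ring.
set GQ := \matrix_(i0 < k, j0 < k) gE rat sS i0 j0.
have Mr : forall i j, M i j = ratr (invmx GQ i j).
  move=> i j; rewrite /M (_ : G = map_mx ratr GQ); first by rewrite -map_invmx mxE.
  by apply/matrixP => i0 j0; rewrite !mxE gE_ratr.
have hoff : forall p : 'I_k * 'I_k, exists N : nat,
    p.1 != p.2 -> (- M p.1 p.2)^-1 <= N%:R.
  case=> i j /=; have [N hN] := rat_bound R (- invmx GQ i j)^-1.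
  exists N => _; rewrite Mr -rmorphN -fmorphV.
  exact: le_trans (ler_norm _) hN.
have hrow : forall i : 'I_k, exists N : nat, (\sum_j M i j)^-1 <= N%:R.
  move=> i; have [N hN] := rat_bound R (\sum_j invmx GQ i j)^-1.
  exists N; rewrite (eq_bigr _ (fun j _ => Mr i j)) -rmorph_sum -fmorphV.
  exact: le_trans (ler_norm _) hN.
have hb : forall i : 'I_k, exists N : nat, `|b i| <= N%:R.
  by move=> i; rewrite /b gE_ratr; apply: rat_bound.
have [Nc hc] : exists N : nat, `|c0| <= N%:R by rewrite /c0 gE_ratr; apply: rat_bound.
have [No hNo] := fin_all_exists hoff.
have [Nr hNr] := fin_all_exists hrow.
have [Nb hNb] := fin_all_exists hb.
set D := (\max_p No p + \max_i Nr i).+1.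
set T := (D + Nc + \sum_i Nb i)%N.
exists T.
set f := fun i j => gE R q i j + T%:R * cc R k.+1 i * cc R k.+1 j.
have cc0 : forall i : 'I_k, cc R k.+1 i = 0.
  by move=> i; rewrite /cc eqSS ltn_eqF /= ?subrr.
have cck : cc R k.+1 k = 1 by rewrite /cc eqxx /= subr0.
have yle : forall i, y i <= \sum_j y j.
  move=> i; rewrite (bigD1 i) //= lerDl sumr_ge0 // => j _; exact: ltW.
have y1 : forall i, y i < 1.
  by move=> i; apply: le_lt_trans (yle i) _; move: ll0 lsum'; lra.
set d := c0 + T%:R - \sum_i y i * b i.
have hyb : \sum_i y i * b i <= (\sum_i Nb i)%:R.
  rewrite natr_sum; apply: le_trans (ler_norm _) _.
  apply: le_trans (ler_norm_sum _ _ _) _; apply: ler_sum => i _.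
  rewrite normrM (gtr0_norm (y0 i)); apply: le_trans (hNb i).
  by rewrite ler_piMl // ltW.
have dD : D%:R <= d.
  move: hc; rewrite ler_norml => /andP [hc _].
  rewrite /d /T !natrD; move: hyb hc; lra.
have D1 : (1 : R) <= D%:R by rewrite ler1n.
have acf : acuteF k.+1 f.
  apply: (block_acute (G := G) (y := y) (b := b) (c1 := c0 + T%:R)) => //.
  - by move=> i j; rewrite /f !cc0 !mulr0 addr0 fG.
  - by move=> i; rewrite /f cc0 mulr0 mul0r addr0.
  - by move=> j; rewrite /f cc0 mulr0 addr0 gE_sym.
  - by rewrite /f cck !mulr1.
  - rewrite -/d; move: dD D1; lra.
  - by rewrite -lsum' addrK.
  - move=> i j ij; rewrite -/d -/M.
    have Mn : 0 < - M i j by rewrite oppr_gt0; case/acuteP: aG => _ o _; apply: o.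
    have h1 : 1 <= d * - M i j.
      rewrite -(mulVf (lt0r_neq0 Mn)) ler_wpM2r ?ltW //.
      apply: le_lt_trans (hNo (i, j) ij) _; apply: lt_le_trans dD.
      by rewrite ltr_nat /D ltnS (leq_trans (@leq_bigmax _ No (i, j))) // leq_addr.
    have := y1 i; have := y1 j; have := y0 i; have := y0 j; move: h1; nra.
  - move=> i; rewrite -/d -/M -lsum' addrK.
    have rp : 0 < \sum_j M i j by case/acuteP: aG.
    have h1 : 1 <= d * \sum_j M i j.
      rewrite -(mulVf (lt0r_neq0 rp)) ler_wpM2r ?ltW //.
      apply: le_lt_trans (hNr i) _; apply: lt_le_trans dD.
      by rewrite ltr_nat /D ltnS (leq_trans (@leq_bigmax _ Nr i)) // leq_addl.
    have s0' := lt_le_trans (y0 i) (yle i).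
    have l1 : l0 < 1 by move: lsum' s0'; lra.
    have := y1 i; have := y0 i; move: h1 ll0 l1; nra.
move=> m w Tw.
have rq : (k.+1 < size q)%N by rewrite sq.
apply: (up (q := q) (r := k.+1) (t0 := T)) => //.
- move=> i; rewrite sq ltnS leq_eqVlt => /orP [/eqP -> | ik]; first by rewrite eqxx.
  by move=> _; rewrite nq // inS.
- move=> x xS.
  have xs : x \in sS by rewrite -sE.
  exists (index x sS); first by rewrite sq ltnS ltnW // -sk index_mem.
  have ik : (index x sS < k.+1)%N by rewrite -sk index_mem.
  by rewrite (ltn_eqF ik) nq // nth_index // eqxx.
- move=> i j; rewrite sq ltnS leq_eqVlt => /orP [/eqP -> | ik]; first by rewrite eqxx.
  rewrite ltnS leq_eqVlt => /orP [/eqP -> | jk]; first by rewrite eqxx.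
  move=> _ _; rewrite !nq // => E; apply/eqP.
  have ik' : (i < size sS)%N by rewrite sk.
  have jk' : (j < size sS)%N by rewrite sk.
  by rewrite -(nth_uniq (bv0 _) ik' jk' us) E.
- rewrite mem_embedS negb_and orbC; apply/orP; left.
  by apply/eqP => w0; move: Tw; rewrite w0 wtw0 leqn0 /T /D !addSn.
- by rewrite sq.
Qed.

End Big.

Section Cand.
Variable R : realFieldType.

Lemma sum_embedS n m (S : {set bv n}) (F : bv (n + m) -> R) :
  \sum_(z in embedS m S) F z = \sum_(x in S) F (catbv x (bv0 m)).
Proof.
rewrite /embedS big_imset //.
by move=> x y _ _ /catbv_inj [].
Qed.

Lemma dot_emb n m (S : {set bv n}) (lam : bv (n + m) -> R) (v : bv n) (w : bv m) x y :
  dot (vec R (catbv v w) - \sum_(z in embedS m S) lam z *: vec R z)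
      (vec R (catbv x (bv0 m)) - vec R (catbv y (bv0 m)))
  = dot (vec R v - \sum_(z in S) lam (catbv z (bv0 m)) *: vec R z) (vec R x - vec R y).
Proof.
rewrite dot_split [X in _ + X]big1 ?addr0; last first.
  by move=> j _; rewrite !mxE !catbv_r ffunE subrr mulr0.
apply: eq_bigr => i _.
rewrite !mxE !catbv_l !summxE sum_embedS; congr (_ * _); congr (_ - _).
by apply: eq_bigr => z _; rewrite !mxE catbv_l.
Qed.

Lemma part1 n m (S : {set bv n}) (u : bv (n + m)) :
  cand_ext R (embedS m S) u <->
  exists (v : bv n) (w : bv m), u = catbv v w /\ cand_ext R S v.
Proof.
split.
- case=> lam [lpos lsum lort].
  exists (fstb u), (sndb u); split; first by rewrite catbvK.
  exists (fun x => lam (catbv x (bv0 m))); split.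
  + by move=> x xS; apply: lpos; rewrite mem_embedS xS eqxx.
  + by rewrite -sum_embedS.
  + move=> x y xS yS; rewrite -(dot_emb _ _ _ (sndb u)) catbvK; apply: lort.
    * by rewrite mem_embedS xS eqxx.
    * by rewrite mem_embedS yS eqxx.
- case=> v [w [-> [lam [lpos lsum lort]]]].
  exists (fun z => lam (fstb z)); split.
  + by move=> z /imsetP [x xS ->]; rewrite fst_cat; apply: lpos.
  + by rewrite sum_embedS; under eq_bigr => x _ do rewrite fst_cat.
  + move=> x' y' /imsetP [x xS ->] /imsetP [y yS ->].
    rewrite dot_emb.
    under eq_bigr => z _ do rewrite fst_cat.
    exact: lort.
Qed.

End Cand.

Lemma wtw_eq0 m (w : bv m) : wtw w = 0%N -> w = bv0 m.
Proof.
move=> /eqP; rewrite /wtw sum_nat_eq0 => /forallP h.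
by apply/ffunP => i; rewrite ffunE; move: (h i); case: (w i).
Qed.

Lemma wtw_ones T : wtw ([ffun => true] : bv T) = T.
Proof.
rewrite /wtw (eq_bigr (fun _ => 1%N)) ?sum1_card ?card_ord // => i _.
by rewrite ffunE.
Qed.

Lemma ex_min (P : nat -> Prop) n : P n -> exists t0, P t0 /\ forall t, P t -> (t0 <= t)%N.
Proof.
elim/ltn_ind: n => n IH Pn.
case: (Classical_Prop.classic (exists t, (t < n)%N /\ P t)) => [[t [tn Pt]]|no].
  exact: IH tn Pt.
exists n; split => // t Pt; rewrite leqNgt; apply/negP => tn.
by apply: no; exists t.
Qed.

Unset Implicit Arguments.

Theorem theorem5p11 (R : realFieldType) (n : nat) (S : {set bv n}) :
  is_acute R S -> (#|S| <= n)%N ->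
  (forall m : nat, (0 < m)%N ->
     (forall u : bv (n + m),
        cand_ext R (embedS m S) u <->
        exists (v : bv n) (w : bv m), u = catbv v w /\ cand_ext R S v) /\
     (forall (v : bv n) (w : bv m),
        acute_ext R S v -> acute_ext R (embedS m S) (catbv v w))) /\
  (forall v : bv n, cand_ext R S v ->
     exists l : int, forall m : nat, (0 < m)%N -> forall w : bv m,
       (l <= (wtw w)%:Z) <-> acute_ext R (embedS m S) (catbv v w)).
Proof.
move=> Sac _; split.
- move=> m _; split.
  + by move=> u; apply: part1.
  + by move=> v w; apply: part2.
- move=> v vC.
  have [T HT] := big_t Sac vC.
  pose P := fun t => exists m (w : bv m), wtw w = t /\ acute_ext R (embedS m S) (catbv v w).
  have PT : P T.
    by exists T, [ffun => true]; rewrite wtw_ones; split => //; apply: HT; rewrite wtw_ones.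
  have [t0 [[m1 [w1 [e1 a1]]] t0min]] := ex_min PT.
  exists t0%:Z => m _ w; rewrite lez_nat; split.
  + move=> tw.
    have [q [r [rq qr qS cov [qinj ac]]]] := extract a1.
    apply: (up rq qr qS cov qinj _ ac); last by rewrite e1.
    rewrite mem_embedS; apply/negP => /andP [vS /eqP w0].
    move: tw; rewrite w0 wtw0 leqn0 -e1 => /eqP /wtw_eq0 w10.
    case: a1 => /negP nE _; apply: nE; rewrite w10 mem_embedS vS eqxx //.
  + by move=> ac; apply: t0min; exists m, w.
Qed.
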